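(* Let $\lambda=(\lambda_1,\dots,\lambda_k)$ be a partition with Ferrers diagram $\Phi_\lambda$. Then the number of edges of the Hasse diagram of $\mathcal{Y}_\lambda$ is $$\ell(\mathcal{Y}_\lambda)=\sum_{(i,j)\in\Phi_\lambda}\big|\mathcal{Y}_{\lambda^{\swarrow}_{ij}}\big|\cdot\big|\mathcal{Y}_{\lambda^{\nearrow}_{ij}}\big|.$$
   Context: A partition is a finite weakly decreasing sequence $\lambda=(\lambda_1\ge\dots\ge\lambda_k>0)$ of positive integers (the empty partition is allowed). Its Ferrers diagram $\Phi_\lambda$ is the set of cells $(i,j)$ with $1\le i\le k$, $1\le j\le\lambda_i$ (row $i$, column $j$). Partitions are ordered by $(a_1,\dots,a_h)\le(b_1,\dots,b_m)$ iff $h\le m$ and $a_i\le b_i$ for all $i\le h$ (equivalently, containment of diagrams). $\mathcal{Y}_\lambda$ is the set of all partitions $\alpha\le\lambda$ (including the empty partition) with this order, so $|\mathcal{Y}_\emptyset|=1$. For a cell $(i,j)\in\Phi_\lambda$: $\lambda^{\nearrow}_{ij}$ is the partition whose parts are $\lambda_1-j,\lambda_2-j,\dots,\lambda_{i-1}-j$ with zero parts removed (the cells of $\Phi_\lambda$ in rows $1,\dots,i-1$ and columns $>j$); $\lambda^{\swarrow}_{ij}$ is the partition whose parts are $\min(\lambda_{i+1},j-1),\dots,\min(\lambda_k,j-1)$ with zero parts removed (the cells of $\Phi_\lambda$ in rows $>i$ and columns $1,\dots,j-1$). $\ell(P)$ is the number of edges (covering pairs) of the Hasse diagram of a finite poset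 $P$. *)

(* Defs.v *)
From mathcomp Require Import all_boot.
Set Implicit Arguments. Unset Strict Implicit. Unset Printing Implicit Defensive.

Definition is_partition (s : seq nat) : bool :=
  sorted geq s && all (fun x => 0 < x) s.

Definition part_le (a b : seq nat) : bool :=
  (size a <= size b) && all (fun i => nth 0 a i <= nth 0 b i) (iota 0 (size a)).

Definition part_lt (a b : seq nat) : bool := part_le a b && (a != b).

Fixpoint bseqs (n m : nat) : seq (seq nat) :=
  if n is n'.+1 then [seq x :: s | x <- iota 0 m.+1, s <- bseqs n' m]
  else [:: [::]].

(* Y_lambda: the list (without repetitions) of all partitions alpha <= lambda.
   Any such alpha has length <= size lambda and parts <= lambda_1, so the
   candidate list below contains all of them. *)
Definition Ylist (lam : seq nat) : seq (seq nat) :=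
  [seq a <- flatten [seq bseqs n (head 0 lam) | n <- iota 0 (size lam).+1]
     | is_partition a && part_le a lam].

Definition covers (lam a b : seq nat) : bool :=
  [&& a \in Ylist lam, b \in Ylist lam, part_lt a b &
      ~~ has (fun c => part_lt a c && part_lt c b) (Ylist lam)].

Definition hasse_edges (lam : seq nat) : nat :=
  \sum_(a <- Ylist lam) \sum_(b <- Ylist lam) covers lam a b.

(* For the 0-based cell (i, j) (i.e. the 1-based cell (i+1, j+1)):
   lam_ne: parts lambda_r - (j+1) for rows r < i (0-based), zeros removed;
   lam_sw: parts min(lambda_r, j) for rows r > i (0-based), zeros removed. *)
Definition lam_ne (lam : seq nat) (i j : nat) : seq nat :=
  [seq x <- [seq nth 0 lam r - j.+1 | r <- iota 0 i] | 0 < x].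

Definition lam_sw (lam : seq nat) (i j : nat) : seq nat :=
  [seq x <- [seq minn (nth 0 lam r) j | r <- iota i.+1 (size lam - i.+1)] | 0 < x].

(* Main.v *)
Require Import Defs.
From mathcomp Require Import all_boot zify.
Set Implicit Arguments. Unset Strict Implicit. Unset Printing Implicit Defensive.

Definition dec (x : seq nat) : bool := sorted geq x.

Lemma decP x : reflect (forall r, nth 0 x r.+1 <= nth 0 x r) (dec x).
Proof.
apply: (iffP (sortedP 0)) => H r.
  case: (ltnP r.+1 (size x)) => h; first exact: H.
  by rewrite nth_default.
by move=> _; apply: H.
Qed.

Lemma all2P x y : reflect (size x = size y /\ forall r, nth 0 x r <= nth 0 y r) (all2 leq x y).
Proof.
apply: (iffP idP).
  elim: x y => [|a x IH] [|b y] //= /andP[h1 h2].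
  case: (IH _ h2) => -> H; split=> // -[|r] //=.
move=> [hs H]; elim: x y hs H => [|a x IH] [|b y] //= [hs] H.
by rewrite (H 0) /= (IH y hs (fun r => H r.+1)).
Qed.

Fixpoint boxes (u : seq nat) : seq (seq nat) :=
  if u is u0 :: u' then [seq x :: s | x <- iota 0 u0.+1, s <- boxes u'] else [:: [::]].

Lemma mem_boxes u s : (s \in boxes u) = all2 leq s u.
Proof.
elim: u s => [|c u IH] [|a s] //;
  have -> : boxes (c :: u) = [seq x :: s | x <- iota 0 c.+1, s <- boxes u] by [].
- by apply/negbTE/allpairsP => -[[x t] [_ _ /=]].
apply/allpairsP/andP => [[[x t] [h1 h2 [-> ->]]]|[h1 h2]].
  split; [by move: h1; rewrite mem_iota | by move: h2; rewrite /= IH].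
by exists (a, s); split => //; [rewrite mem_iota | rewrite IH].
Qed.

Lemma uniq_boxes u : uniq (boxes u).
Proof.
elim: u => [|c u IH] //.
have -> : boxes (c :: u) = [seq x :: s | x <- iota 0 c.+1, s <- boxes u] by [].
apply: allpairs_uniq => //; first exact: iota_uniq.
by move=> [a s] [b t] _ _ /= [-> ->].
Qed.

Lemma boxes_cat u v : boxes (u ++ v) = [seq p ++ q | p <- boxes u, q <- boxes v].
Proof.
elim: u => [|c u IH]; first by rewrite /= cats0 map_id.
have -> : boxes ((c :: u) ++ v) = [seq x :: s | x <- iota 0 c.+1, s <- boxes (u ++ v)] by [].
have -> : boxes (c :: u) = [seq x :: s | x <- iota 0 c.+1, s <- boxes u] by [].
rewrite IH.
elim: (iota 0 c.+1) => [|a l IHl] //=.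
rewrite IHl allpairs_cat; congr (_ ++ _).
elim: (boxes u) => [|p ps IHp] //=.
by rewrite map_cat IHp -map_comp.
Qed.

Lemma count_allpairs (A B C : Type) (f : A -> B -> C) (P : pred C) s t :
  count P [seq f x y | x <- s, y <- t] = \sum_(x <- s) count (fun y => P (f x y)) t.
Proof.
elim: s => [|a s IH]; first by rewrite big_nil.
by rewrite big_cons /= count_cat count_map IH.
Qed.

Lemma sum_count (T : Type) (P : pred T) s : \sum_(x <- s) (P x : nat) = count P s.
Proof. by elim: s => [|a s IH]; rewrite ?big_nil ?big_cons //= IH. Qed.

Lemma nth_dec x i j : dec x -> i <= j -> nth 0 x j <= nth 0 x i.
Proof.
move=> /decP H /subnK <-; elim: (j - i) => [|d IH] //=.
by rewrite addSn; apply: leq_trans (H _) IH.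
Qed.

Lemma part_leP a b : reflect (size a <= size b /\ forall r, nth 0 a r <= nth 0 b r) (part_le a b).
Proof.
apply: (iffP andP) => -[h1 h2]; split=> //.
  move=> r; case: (ltnP r (size a)) => hr; last by rewrite nth_default.
  by move/allP: h2; apply; rewrite mem_iota.
by apply/allP => r _; apply: h2.
Qed.

Lemma bseqs_boxes n m : bseqs n m = boxes (nseq n m).
Proof. by elim: n => //= n ->. Qed.

Lemma all2_nseq s m : all2 leq s (nseq (size s) m) = all (fun y => y <= m) s.
Proof. by elim: s => //= a s ->. Qed.

Lemma geq_trans : transitive geq.
Proof. by move=> a b c h1 h2; apply: leq_trans h2 h1. Qed.

Lemma nth_pad a m r : nth 0 (a ++ nseq m 0) r = nth 0 a r.
Proof.
rewrite nth_cat; case: ltnP => // h.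
by rewrite nth_nseq if_same nth_default.
Qed.

Lemma filter_nseq0 m : [seq y <- nseq m 0 | 0 < y] = [::].
Proof. by elim: m. Qed.

Lemma sorted0 x : dec x ->
  x = [seq y <- x | 0 < y] ++ nseq (size x - size [seq y <- x | 0 < y]) 0.
Proof.
elim: x => [|a x IH] // hd.
have hx : dec x by move: hd; rewrite /dec /=; apply: path_sorted.
rewrite /=.
case: (posnP a) => [a0|apos].
  subst a.
  have E : x = nseq (size x) 0.
    apply: (@eq_from_nth _ 0); first by rewrite size_nseq.
    move=> r _; rewrite nth_nseq if_same.
    have := nth_dec hd (leq0n r.+1); rewrite /= => h; apply/eqP; rewrite -leqn0; exact: h.
  by rewrite E filter_nseq0 size_nseq.
by rewrite /= subSS {1}(IH hx).
Qed.

Lemma uniq_flat (g : nat -> seq (seq nat)) m l :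
  (forall n, uniq (g n)) -> (forall n y, y \in g n -> size y = n) ->
  uniq (flatten (map g (iota m l))).
Proof.
move=> hu hs; elim: l m => [|l IH] m //=.
rewrite cat_uniq hu IH andbT /=.
apply/hasPn => y /flatten_mapP [n]; rewrite mem_iota => /andP[h1 _] hy.
apply/negP => /hs; rewrite (hs _ _ hy) => E; by move: h1; rewrite E ltnn.
Qed.

Definition ispart (a : seq nat) := dec a && all (fun y => 0 < y) a.

Lemma Ymem mu a : is_partition mu -> (a \in Ylist mu) = is_partition a && part_le a mu.
Proof.
move=> /andP[hmu _]; rewrite /Ylist mem_filter.
case P: (is_partition a && part_le a mu) => //; rewrite andTb.
move/andP: P => [/andP[ha hpos] /part_leP [hsz hle]].
apply/flatten_mapP; exists (size a); first by rewrite mem_iota.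
rewrite bseqs_boxes mem_boxes all2_nseq; apply/allP => y /(nthP 0) [r hr <-].
apply: leq_trans (hle r) _.
have := @nth_dec mu 0 r hmu (leq0n r); case: (mu) => //=.
Qed.

Lemma Yuniq mu : uniq (Ylist mu).
Proof.
apply: filter_uniq; apply: uniq_flat => [n|n y].
  by rewrite bseqs_boxes; apply: uniq_boxes.
by rewrite bseqs_boxes mem_boxes => /all2P [-> _]; rewrite size_nseq.
Qed.

Lemma Yperm mu m : is_partition mu ->
  perm_eq (map (fun a => a ++ nseq (size (mu ++ nseq m 0) - size a) 0) (Ylist mu))
    [seq x <- boxes (mu ++ nseq m 0) | dec x].
Proof.
move=> hmu; set v := mu ++ nseq m 0; set n := size v.
set pd := (fun a : seq nat => a ++ nseq (n - size a) 0).
have hn : size mu <= n by rewrite /n size_cat leq_addr.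
have pdK : forall a, all (fun y => 0 < y) a -> [seq y <- pd a | 0 < y] = a.
  move=> a ha; rewrite filter_cat filter_nseq0 cats0; exact/all_filterP.
have hperm : perm_eq (map pd (Ylist mu)) [seq x <- boxes v | dec x].
  apply: uniq_perm.
  - rewrite map_inj_in_uniq ?Yuniq //.
    move=> a b; rewrite !Ymem // => /andP[/andP[_ ha] _] /andP[/andP[_ hb] _] E.
    by rewrite -(pdK a ha) -(pdK b hb) E.
  - exact/filter_uniq/uniq_boxes.
  move=> y; rewrite mem_filter mem_boxes; apply/mapP/andP.
  - move=> [a]; rewrite Ymem // => /andP[/andP[ha hpos] /part_leP[hsz hle]] ->.
    split.
      by apply/decP => r; rewrite !nth_pad; apply/decP.
    apply/all2P; split.
      rewrite size_cat size_nseq subnKC //; exact: leq_trans hsz hn.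
    by move=> r; rewrite nth_pad /v nth_pad.
  - move=> [hd /all2P [hs hle]].
    exists [seq z <- y | 0 < z]; last first.
      by rewrite {1}(sorted0 hd) hs.
    rewrite Ymem //; apply/andP; split.
      apply/andP; split; first exact: sorted_filter geq_trans _ _ hd.
      exact: filter_all.
    have E : forall r, nth 0 [seq z <- y | 0 < z] r = nth 0 y r.
      by move=> r; rewrite {2}(sorted0 hd) nth_pad.
    apply/part_leP; split; last first.
      by move=> r; rewrite E; apply: leq_trans (hle r) _; rewrite /v nth_pad.
    rewrite leqNgt; apply/negP => h.
    have h1 : 0 < nth 0 [seq z <- y | 0 < z] (size mu).
      by have /allP := filter_all (fun z => 0 < z) y; apply; exact: mem_nth.
    have := hle (size mu); rewrite /v nth_pad (@nth_default _ 0 mu) // -E.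
    by rewrite leqNgt h1.
exact: hperm.
Qed.

Lemma Ypad mu m : is_partition mu -> size (Ylist mu) = count dec (boxes (mu ++ nseq m 0)).
Proof.
by move=> hmu; rewrite -size_filter -(perm_size (Yperm m hmu)) size_map.
Qed.

Definition inS (lam x : seq nat) : Prop :=
  [/\ size x = size lam, (forall r, nth 0 x r <= nth 0 lam r) & (forall r, nth 0 x r.+1 <= nth 0 x r)].

Lemma memS lam x : x \in [seq x <- boxes lam | dec x] <-> inS lam x.
Proof.
rewrite mem_filter mem_boxes; split.
  by move=> /andP[/decP h1 /all2P[h2 h3]].
by move=> [h1 h2 h3]; apply/andP; split; [apply/decP|apply/all2P].
Qed.

Definition lt' (x y : seq nat) : Prop := (forall r, nth 0 x r <= nth 0 y r) /\ x <> y.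

Lemma eq_nth_sz (x y : seq nat) : size x = size y -> (forall r, nth 0 x r = nth 0 y r) -> x = y.
Proof. by move=> h H; apply: (eq_from_nth (x0 := 0)) h _ => r _. Qed.

Lemma cover_char lam x y : inS lam x -> inS lam y ->
  (lt' x y /\ ~ (exists z, [/\ inS lam z, lt' x z & lt' z y])) <->
  (exists i, i < size lam /\ y = incr_nth x i).
Proof.
move=> [sx bx dx] [sy boy dy]; split.
- move=> [[hle hne] hnb].
  have hex : exists r, nth 0 x r < nth 0 y r.
    have : ~~ all (fun r => nth 0 x r == nth 0 y r) (iota 0 (size lam)).
      apply/negP => /allP H; apply: hne; apply: eq_nth_sz; first by rewrite sx sy.
      move=> r; case: (ltnP r (size lam)) => hr; first by apply/eqP/H; rewrite mem_iota.
      by rewrite !nth_default // ?sx ?sy.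
    by case/allPn => r _ hr; exists r; rewrite ltn_neqAle hr hle.
  case: (ex_minnP hex) => i hi hmin.
  have ik : i < size lam.
    rewrite ltnNge; apply/negP => h; move: hi; rewrite (@nth_default _ 0 y) // sy //.
  exists i; split => //.
  have sz : size (incr_nth x i) = size lam by rewrite size_incr_nth sx ik.
  have hz : inS lam (incr_nth x i).
    split => // r; rewrite !nth_incr_nth.
      case: eqP => [<-|_] /=; last exact: bx.
      by apply: leq_trans (boy i); rewrite add1n.
    case: (eqVneq i r.+1) => [E|N].
      have hr : nth 0 y r <= nth 0 x r.
        rewrite leqNgt; apply/negP => /hmin; rewrite E ltnn //.
      have := dy r; subst i; case: eqP => [/eqP|_]; first by rewrite eqn_leq ltnn.
      move: hi hr; rewrite /= add0n; lia.
    case: eqP => _ /=; last by rewrite add0n (dx r).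
    rewrite add0n; apply: leq_trans (dx r) (leq_addl _ _).
  case: (eqVneq y (incr_nth x i)) => [//|N]; exfalso; apply: hnb.
  exists (incr_nth x i); split => //; split.
  + by move=> r; rewrite nth_incr_nth leq_addl.
  + by move=> E; have := congr1 (fun s => nth 0 s i) E; rewrite /= nth_incr_nth eqxx; lia.
  + by move=> r; rewrite nth_incr_nth; case: eqP => [<-|_] /=; [rewrite add1n | rewrite add0n hle].
  + by move=> E; rewrite E eqxx in N.
- move=> [i [ik ->]]; split.
    split; first by move=> r; rewrite nth_incr_nth leq_addl.
    by move=> E; have := congr1 (fun s => nth 0 s i) E; rewrite /= nth_incr_nth eqxx; lia.
  move=> [z [[sz bz dz] [h1 n1] [h2 n2]]].
  have hr : forall r, r != i -> nth 0 z r = nth 0 x r.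
    move=> r rn; apply/eqP; rewrite eqn_leq h1 andbT.
    by have := h2 r; rewrite nth_incr_nth eq_sym (negbTE rn) add0n.
  have := h1 i; have := h2 i; rewrite nth_incr_nth eqxx add1n => a b.
  case: (ltngtP (nth 0 z i) (nth 0 x i)) => c; first lia.
  + apply: n2; apply: eq_nth_sz; first by rewrite size_incr_nth sx ik.
    move=> r; case: (eqVneq r i) => [->|rn]; first by rewrite nth_incr_nth eqxx; lia.
    by rewrite nth_incr_nth eq_sym (negbTE rn) hr.
  + apply: n1; apply: eq_nth_sz; first by rewrite sx.
    move=> r; case: (eqVneq r i) => [->|rn]; first by rewrite c.
    by rewrite hr.
Qed.

Lemma part_le_pos c d : all (fun y => 0 < y) c -> part_le c d <-> (forall r, nth 0 c r <= nth 0 d r).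
Proof.
move=> hc; split; first by case/part_leP.
move=> H; apply/part_leP; split => //.
rewrite leqNgt; apply/negP => h.
have h1 : 0 < nth 0 c (size d) by move/allP: hc; apply; exact: mem_nth.
by have := H (size d); rewrite (@nth_default _ 0 d) // leqn0 => /eqP E; rewrite E in h1.
Qed.

Definition pad (k : nat) (a : seq nat) := a ++ nseq (k - size a) 0.

Lemma padK k a : all (fun y => 0 < y) a -> [seq y <- pad k a | 0 < y] = a.
Proof. by move=> ha; rewrite filter_cat filter_nseq0 cats0; exact/all_filterP. Qed.

Lemma Yperm0 lam : is_partition lam ->
  perm_eq (map (pad (size lam)) (Ylist lam)) [seq x <- boxes lam | dec x].
Proof. by move=> h; have := Yperm 0 h; rewrite /= cats0. Qed.

Lemma Y_S lam a : is_partition lam -> a \in Ylist lam -> inS lam (pad (size lam) a).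
Proof.
move=> h ha; apply/memS; rewrite -(perm_mem (Yperm0 h)); exact: map_f.
Qed.

Lemma S_Y lam z : is_partition lam -> inS lam z -> exists2 c, c \in Ylist lam & z = pad (size lam) c.
Proof.
move=> h /memS; rewrite -(perm_mem (Yperm0 h)) => /mapP [c hc ->]; by exists c.
Qed.

Lemma plt_pad lam c d : is_partition lam -> c \in Ylist lam -> d \in Ylist lam ->
  reflect (lt' (pad (size lam) c) (pad (size lam) d)) (part_lt c d).
Proof.
move=> h; rewrite !Ymem // => /andP[/andP[_ hc] _] /andP[/andP[_ hd] _].
apply: (iffP andP) => [[h1 h2]|[h1 h2]]; split.
- by move=> r; rewrite !nth_pad; exact: (proj1 (@part_le_pos c d hc) h1 r).
- by move=> E; have := congr1 (fun s => [seq y <- s | 0 < y]) E; rewrite /= !padK // => E'; rewrite E' eqxx in h2.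
- by apply: (proj2 (@part_le_pos c d hc)) => r; have := h1 r; rewrite !nth_pad.
- by apply/eqP => E; apply: h2; rewrite E.
Qed.

Lemma covers_pad lam a b : is_partition lam -> a \in Ylist lam -> b \in Ylist lam ->
  covers lam a b = has (fun i => incr_nth (pad (size lam) a) i == pad (size lam) b) (iota 0 (size lam)).
Proof.
move=> h ha hb.
have := cover_char (Y_S h ha) (Y_S h hb) => -[c1 c2].
rewrite /covers ha hb !andTb; apply/idP/idP.
- move=> /andP [/(plt_pad h ha hb) hlt hnh].
  case: c1.
    split=> // -[z [hz h1 h2]].
    case: (S_Y h hz) => c hc E; subst z.
    apply: (negP hnh); apply/hasP; exists c => //; apply/andP; split.
      exact/(plt_pad h ha hc).
    exact/(plt_pad h hc hb).
  move=> i [ik E]; apply/hasP; exists i; first by rewrite mem_iota.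
  by rewrite E.
- move=> /hasP [i]; rewrite mem_iota => /andP[_ ik] /eqP E.
  case: c2; first by exists i; split.
  move=> hlt hnb; apply/andP; split; first exact/(plt_pad h ha hb).
  apply/hasPn => c hc; apply/negP => /andP [h1 h2].
  apply: hnb; exists (pad (size lam) c); split.
  + exact: Y_S.
  + exact/(plt_pad h ha hc).
  + exact/(plt_pad h hc hb).
Qed.

Lemma all2_min s w j : all2 leq s (map (fun x => minn x j) w) = all2 leq s w && all (fun z => z <= j) s.
Proof.
elim: s w => [|a s IH] [|c w] //=.
rewrite leq_min IH.
by case: (a <= c); case: (a <= j); case: (all2 leq s w); case: (all _ s).
Qed.

Lemma countB (P : pred (seq nat)) w j :
  count (fun s => P s && all (fun z => z <= j) s) (boxes w) = count P (boxes (map (fun x => minn x j) w)).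
Proof.
have hp : perm_eq (boxes (map (fun x => minn x j) w)) [seq s <- boxes w | all (fun z => z <= j) s].
  apply: uniq_perm; [exact: uniq_boxes | exact/filter_uniq/uniq_boxes|].
  by move=> s; rewrite mem_filter !mem_boxes all2_min andbC.
by rewrite ((permP hp) P) count_filter.
Qed.

Lemma path_add c a q : path geq (c + a) (map (addn c) q) = path geq a q.
Proof. by elim: q a => [|b q IH] a //=; rewrite IH leq_add2l. Qed.

Lemma dec_add c q : dec (map (addn c) q) = dec q.
Proof. by case: q => //= a q; rewrite path_add. Qed.

Lemma all2_add c q u : all (fun z => c <= z) u ->
  all2 leq (map (addn c) q) u = all2 leq q (map (fun x => x - c) u).
Proof.
elim: q u => [|a q IH] [|b u] //= /andP[hb hu].
rewrite IH //; congr andb.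
by apply/idP/idP => H; lia.
Qed.

Lemma countA (P : pred (seq nat)) u c : all (fun z => c <= z) u ->
  (forall q, P (map (addn c) q) = P q) ->
  count (fun p => P p && all (fun z => c <= z) p) (boxes u) =
  count P (boxes (map (fun x => x - c) u)).
Proof.
move=> hu hP.
have hp : perm_eq (map (map (addn c)) (boxes (map (fun x => x - c) u)))
                  [seq s <- boxes u | all (fun z => c <= z) s].
  apply: uniq_perm.
  - rewrite map_inj_uniq ?uniq_boxes //; apply: inj_map; exact: addnI.
  - exact/filter_uniq/uniq_boxes.
  move=> s; rewrite mem_filter mem_boxes; apply/mapP/idP.
  - move=> [q]; rewrite mem_boxes => hq ->; rewrite all2_add // hq andbT.
    by apply/allP => z /mapP [a _ ->]; apply: leq_addr.
  - move=> /andP [hc hs]; exists (map (fun x => x - c) s).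
      by rewrite mem_boxes -all2_add // -map_comp map_id_in // => z /(allP hc) hz /=; rewrite subnKC.
    by rewrite -map_comp map_id_in // => z /(allP hc) hz /=; rewrite subnKC.
transitivity (count P [seq s <- boxes u | all (fun z => c <= z) s]); first by rewrite count_filter.
by rewrite -((permP hp) P) count_map; apply: eq_count => q /=; exact: hP.
Qed.

Lemma all_last a p j : path geq a p -> all (fun z => j < z) (a :: p) = (j < last a p).
Proof.
elim: p a => [|b p IH] a /=; first by rewrite andbT.
move=> /andP [hab hp]; rewrite -IH //=.
by apply/idP/idP => [/andP[_ ->]|/andP[h ->]] //; rewrite andbT (leq_trans h hab).
Qed.

Lemma splitR p y s j :
  (nth 0 (p ++ y :: s) (size p) == j) &&
  ((size p == 0) || (j < nth 0 (p ++ y :: s) (size p).-1)) && dec (p ++ y :: s)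
  = [&& dec p && all (fun z => j < z) p, y == j & dec s && all (fun z => z <= j) s].
Proof.
rewrite nth_cat ltnn subnn /=.
case: (eqVneq y j) => [->|N]; last by rewrite !andbF.
rewrite andTb [true && _]/=.
case: p => [|a p].
  rewrite /dec /= path_sortedE; last exact: geq_trans.
  by rewrite andbC.
have E : nth 0 ((a :: p) ++ j :: s) (size (a :: p)).-1 = last a p.
  by rewrite nth_cat /= ltnSn; exact: (nth_last 0 (a :: p)).
have D : dec ((a :: p) ++ j :: s) = dec (a :: p) && (j <= last a p) && path geq j s.
  by rewrite /dec /= cat_path /= andbA.
have -> : (size (a :: p) == 0) = false by [].
rewrite orFb E D (path_sortedE geq_trans j s).
case hp: (dec (a :: p)); last by rewrite !andbF.
rewrite (all_last j hp) !andTb.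
case h: (j < last a p) => //=.
by rewrite (ltnW h) /= andbC.
Qed.

Lemma sum_pick n (a : nat) (P : pred nat) : \sum_(j < n) ((a == j :> nat) && P j) = (a < n) && P a.
Proof.
elim: n => [|n IH]; first by rewrite big_ord0.
rewrite big_ord_recr /= IH.
have -> : (a < n.+1) = (a < n) || (a == n) by rewrite ltnS leq_eqVlt orbC.
case: (eqVneq a n) => [->|N]; first by rewrite ltnn /=; case: (P n).
by rewrite orbF addn0.
Qed.

Lemma count_andb (T : Type) (b : bool) (P : pred T) l : count (fun s => b && P s) l = b * count P l.
Proof. by case: b; rewrite ?mul1n ?mul0n //; elim: l. Qed.

Lemma sum_iota k (F : nat -> nat) : \sum_(i <- iota 0 k) F i = \sum_(i < k) F i.
Proof. by rewrite -(big_mkord xpredT) /index_iota subn0. Qed.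

Lemma count_mem_swap (T : eqType) (s t : seq T) : uniq s -> uniq t -> count (mem t) s = count (mem s) t.
Proof.
move=> us ut; rewrite -!size_filter; apply: perm_size; apply: uniq_perm; try exact: filter_uniq.
by move=> y; rewrite !mem_filter andbC.
Qed.

Lemma Ysize_of v : dec v -> size (Ylist [seq y <- v | 0 < y]) = count dec (boxes v).
Proof.
move=> hv; rewrite {2}(sorted0 hv); apply: Ypad; apply/andP; split.
  exact: sorted_filter geq_trans _ _ hv.
exact: filter_all.
Qed.

Lemma addable lam x i : inS lam x -> i < size lam ->
  (incr_nth x i \in [seq x <- boxes lam | dec x]) =
  (nth 0 x i < nth 0 lam i) && ((i == 0) || (nth 0 x i < nth 0 x i.-1)).
Proof.
move=> [sx bx dx] ik; apply/idP/idP.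
- move=> /memS [sz bz dz]; apply/andP; split.
    by have := bz i; rewrite nth_incr_nth eqxx add1n.
  move: bz dz; case: i ik {sz} => [|i] ik bz dz //=.
  have := dz i; rewrite !nth_incr_nth eqxx add1n.
  have -> : (i.+1 == i) = false by rewrite gtn_eqF.
  by rewrite add0n.
- move=> /andP [h1 h2]; apply/memS; split.
  + by rewrite size_incr_nth sx ik.
  + move=> r; rewrite nth_incr_nth; case: eqP => [<-|_]; [by rewrite add1n | exact: bx].
  + move=> r; rewrite !nth_incr_nth.
    case: (eqVneq i r.+1) => [E|N].
      subst i; have -> : (r.+1 == r) = false by rewrite gtn_eqF.
      by move: h2; rewrite /= add1n add0n.
    case: (eqVneq i r) => [E|N2]; last by rewrite !add0n dx.
    by subst i; rewrite add0n add1n (leq_trans (dx r)).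
Qed.

Lemma cellcount lam i j : is_partition lam -> i < size lam -> j < nth 0 lam i ->
  \sum_(x <- [seq x <- boxes lam | dec x]) ((nth 0 x i == j) && ((i == 0) || (j < nth 0 x i.-1))) =
  size (Ylist (lam_sw lam i j)) * size (Ylist (lam_ne lam i j)).
Proof.
move=> hl hi hj.
have hdl : dec lam by case/andP: hl.
rewrite sum_count count_filter.
set u := take i lam; set w := drop i.+1 lam; set c := nth 0 lam i.
have E : lam = u ++ c :: w by rewrite /u /w /c -drop_nth // cat_take_drop.
have su : size u = i by rewrite /u size_take hi.
rewrite {1}E boxes_cat count_allpairs.
have Bc : boxes (c :: w) = [seq y :: s | y <- iota 0 c.+1, s <- boxes w] by [].
pose A p := dec p && all (fun z => j < z) p.
pose B s := dec s && all (fun z => z <= j) s.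
transitivity (\sum_(p <- boxes u) (A p * count B (boxes w))).
  apply: eq_big_seq => p; rewrite mem_boxes => /all2P [hsz _].
  rewrite su in hsz.
  rewrite Bc count_allpairs.
  transitivity (\sum_(y <- iota 0 c.+1) ((y == j) * (A p * count B (boxes w)))).
    apply: eq_bigr => y _.
    transitivity (count (fun s => (A p && (y == j)) && B s) (boxes w)).
      apply: eq_count => s; rewrite /= -hsz splitR; by rewrite andbA.
    by rewrite count_andb -mulnb mulnCA mulnA.
  rewrite -big_distrl /= sum_count.
  have -> : count (fun y => y == j) (iota 0 c.+1) = 1.
    by rewrite (eq_count (a2 := pred1 j)) // count_uniq_mem ?iota_uniq // mem_iota /= ltnS ltnW.
  by rewrite mul1n.
rewrite -big_distrl sum_count mulnC.
congr (_ * _).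
- rewrite /A (countA (P := dec)) //; last by move=> q; rewrite dec_add.
    have -> : lam_ne lam i j = [seq y <- map (fun x => x - j.+1) u | 0 < y].
      rewrite /lam_ne /u -(map_nth_iota0 0 (s := lam)) ?(ltnW hi) //.
      by rewrite -map_comp.
    symmetry; apply: Ysize_of; apply: (homo_sorted (e := geq)); last exact: take_sorted.
    by move=> x y /= h; lia.
  apply/allP => z /(nthP 0) [r hr <-].
  rewrite /u nth_take; last by rewrite su in hr.
  apply: leq_trans hj (nth_dec hdl _); apply: ltnW; by rewrite su in hr.
- rewrite /B countB.
  have -> : lam_sw lam i j = [seq y <- map (fun x => minn x j) w | 0 < y].
    rewrite /lam_sw /w.
    have -> : [seq minn (nth 0 lam r) j | r <- iota i.+1 (size lam - i.+1)]
            = map (fun x => minn x j) [seq nth 0 lam r | r <- iota i.+1 (size lam - i.+1)].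
      by rewrite -map_comp.
    by rewrite map_nth_iota // take_oversize // size_drop.
  symmetry; apply: Ysize_of; apply: (homo_sorted (e := geq)); last exact: drop_sorted.
  by move=> x y /= h; lia.
Qed.

Lemma step1 lam : is_partition lam ->
  hasse_edges lam = \sum_(x <- [seq x <- boxes lam | dec x]) \sum_(i < size lam)
                       (incr_nth x i \in [seq x <- boxes lam | dec x]).
Proof.
move=> h; rewrite /hasse_edges.
set S := [seq x <- boxes lam | dec x].
have hp := Yperm0 h.
have uS : uniq S by exact/filter_uniq/uniq_boxes.
have G : forall x, \sum_(y <- S) has (fun i => incr_nth x i == y) (iota 0 (size lam))
                 = \sum_(i < size lam) (incr_nth x i \in S).
  move=> x; rewrite sum_count.
  transitivity (count (mem [seq incr_nth x i | i <- iota 0 (size lam)]) S).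
    apply: eq_count => y; apply/hasP/mapP => [[i hi /eqP E]|[i hi E]]; exists i => //; by rewrite E.
  rewrite count_mem_swap //; last first.
    rewrite map_inj_uniq ?iota_uniq // => a b E.
    have := congr1 (fun s => nth 0 s a) E; rewrite /= !nth_incr_nth eqxx.
    by case: (eqVneq b a) => [-> //|N]; rewrite add0n; lia.
  by rewrite count_map -sum_count sum_iota.
transitivity (\sum_(a <- Ylist lam) \sum_(i < size lam) (incr_nth (pad (size lam) a) i \in S)).
  apply: eq_big_seq => a ha; rewrite -G -(perm_big _ hp) big_map.
  apply: eq_big_seq => b hb; by rewrite (covers_pad h ha hb).
by rewrite -(perm_big _ hp) big_map.
Qed.

Theorem mainTheorem18 (lam : seq nat) :
  is_partition lam ->
  hasse_edges lam =
  \sum_(i < size lam) \sum_(j < nth 0 lam i)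
     size (Ylist (lam_sw lam i j)) * size (Ylist (lam_ne lam i j)).
Proof.
move=> h; rewrite step1 // exchange_big; apply: eq_bigr => i _.
transitivity (\sum_(x <- [seq x <- boxes lam | dec x]) \sum_(j < nth 0 lam i)
                ((nth 0 x i == j :> nat) && ((i == 0 :> nat) || (j < nth 0 x i.-1)))).
  apply: eq_big_seq => x /memS hx.
  rewrite (sum_pick _ _ (fun j => (i == 0 :> nat) || (j < nth 0 x i.-1))); by rewrite (addable hx (ltn_ord i)).
rewrite exchange_big; apply: eq_bigr => j _.
exact: cellcount.
Qed.
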